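(* For all integers $n\ge1$ and $m\ge0$, $\operatorname{diam}(Y_{n,m})=\operatorname{ecc}_{Z_{n,m}}(0)$, where $0$ is the all-zero vertex of $Z_{n,m}$.
   Context: For integers $n\ge1$, $m\ge0$, the Yoke graph $Y_{n,m}$ is the simple graph whose vertices are the tuples $v=(v_0,\dots,v_{m+1})$ with $v_0,v_{m+1}\in\mathbb{Z}_n$, $v_1,\dots,v_m\in\{0,1\}$ and $\sum_{i=0}^{m+1}v_i\equiv0\pmod n$. The dYoke graph $Z_{n,m}$ is defined identically except that $v_1,\dots,v_m\in\{-1,0,1\}$. In both graphs, two vertices $u,v$ are adjacent iff there is $0\le i\le m$ with $u_j=v_j$ for all $j\notin\{i,i+1\}$ and either ($u_i=v_i+1$, $u_{i+1}=v_{i+1}-1$) or ($u_i=v_i-1$, $u_{i+1}=v_{i+1}+1$), with the bucket entries (indices $0$ and $m+1$) computed modulo $n$. $\operatorname{ecc}_G(x)$ is the maximum distance from $x$ to a vertex of $G$. *)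

(* Defs.v *)
From mathcomp Require Import all_boot all_algebra.
Set Implicit Arguments. Unset Strict Implicit. Unset Printing Implicit Defensive.
Import GRing.Theory Num.Theory.

Section GraphDist.
Variables (T : finType) (e : rel T).

Fixpoint ball (k : nat) (x : T) : {set T} :=
  match k with
  | 0 => [set x]
  | k'.+1 => ball k' x :|: [set y | [exists z in ball k' x, e z y]]
  end.

(* graph distance; None encodes "infinite" (y unreachable from x).
   A shortest walk visits distinct vertices, so has length < #|T|. *)
Definition dist (x y : T) : option nat :=
  if [exists k : 'I_#|T|, y \in ball k x]
  then Some (find (fun k => y \in ball k x) (iota 0 #|T|))
  else None.

Definition ecc (x : T) : option nat :=
  if [forall y, dist x y != None]
  then Some (\max_(y : T) odflt 0 (dist x y)) else None.

Definition diam : option nat :=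
  if [forall x, forall y, dist x y != None]
  then Some (\max_(x : T) \max_(y : T) odflt 0 (dist x y)) else None.
End GraphDist.

(* A vertex is (v_0, (v_1..v_m), v_{m+1}) with buckets v_0, v_{m+1} in Z_n
   (represented by 'I_n) and interior entries in D, interpreted as integers via f. *)
Local Open Scope ring_scope.

Definition yk_cond (n m : nat) (D : finType) (f : D -> int)
  (v : 'I_n * m.-tuple D * 'I_n) : bool :=
  ((nat_of_ord v.1.1)%:Z + \sum_(d <- v.1.2) f d + (nat_of_ord v.2)%:Z == 0 %[mod n%:Z])%Z.

Definition yk_vtx (n m : nat) (D : finType) (f : D -> int) :=
  {v : 'I_n * m.-tuple D * 'I_n | yk_cond f v}.

Definition yk_entry (n m : nat) (D : finType) (f : D -> int)
  (v : yk_vtx n m f) (j : nat) : int :=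
  let w := val v in
  if j == 0%N then (nat_of_ord w.1.1)%:Z
  else if j == m.+1 then (nat_of_ord w.2)%:Z
  else nth 0 (map f w.1.2) j.-1.

Definition yk_eqat (n m j : nat) (a b : int) : bool :=
  if (j == 0%N) || (j == m.+1) then (a == b %[mod n%:Z])%Z else a == b.

Definition yk_adj (n m : nat) (D : finType) (f : D -> int) : rel (yk_vtx n m f) :=
  fun u v =>
    (u != v) &&
    [exists i : 'I_m.+1,
      [forall j : 'I_m.+2, ((nat_of_ord j != i) && (nat_of_ord j != i.+1)) ==>
          yk_eqat n m j (yk_entry u j) (yk_entry v j)]
      && ((yk_eqat n m i (yk_entry u i) (yk_entry v i + 1)
           && yk_eqat n m i.+1 (yk_entry u i.+1) (yk_entry v i.+1 - 1))
       || (yk_eqat n m i (yk_entry u i) (yk_entry v i - 1)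
           && yk_eqat n m i.+1 (yk_entry u i.+1) (yk_entry v i.+1 + 1)))].

Definition yoke_val (b : bool) : int := (nat_of_bool b)%:Z.
Definition Yoke_vtx (n m : nat) := yk_vtx n m yoke_val.
Definition Yoke_adj (n m : nat) : rel (Yoke_vtx n m) := @yk_adj n m _ yoke_val.

(* dYoke graph Z_{n,m}: interior entries in {-1,0,1}, d : 'I_3 encodes d - 1 *)
Definition dyoke_val (d : 'I_3) : int := (nat_of_ord d)%:Z - 1.
Definition dYoke_vtx (n m : nat) := yk_vtx n m dyoke_val.
Definition dYoke_adj (n m : nat) : rel (dYoke_vtx n m) := @yk_adj n m _ dyoke_val.

(* Main.v *)
Require Import Defs.
From mathcomp Require Import all_boot all_algebra.
Import GRing.Theory Num.Theory.
From mathcomp Require Import zify ring.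
Set Implicit Arguments. Unset Strict Implicit. Unset Printing Implicit Defensive.

Section G.
Variables (T : finType) (e : rel T).

Lemma ballS k x : ball e k.+1 x = ball e k x :|: [set y | [exists z in ball e k x, e z y]].
Proof. by []. Qed.

Lemma ball_self k x : x \in ball e k x.
Proof. elim: k => [|k IH]; first by rewrite /= set11. by rewrite ballS inE IH. Qed.

Lemma ball_sub k x y : y \in ball e k x -> y \in ball e k.+1 x.
Proof. by rewrite ballS inE => ->. Qed.

Lemma ball_mono k k' x y : (k <= k')%N -> y \in ball e k x -> y \in ball e k' x.
Proof.
move=> /subnK <- Hy; elim: (k' - k)%N => [|d IH] //.
by rewrite addSn; apply: ball_sub.
Qed.

Lemma ball_step k x z y : z \in ball e k x -> e z y -> y \in ball e k.+1 x.
Proof. move=> Hz Hzy; rewrite ballS !inE; apply/orP; right; apply/existsP; exists z; by rewrite Hz. Qed.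

Lemma ballS_inv k x y : y \in ball e k.+1 x ->
  y \in ball e k x \/ exists2 z, z \in ball e k x & e z y.
Proof.
rewrite ballS !inE => /orP [->|/existsP [z /andP [Hz Hzy]]]; first by left.
by right; exists z.
Qed.

Lemma ball_pre k x x' y : e x x' -> y \in ball e k x' -> y \in ball e k.+1 x.
Proof.
move=> Hx; elim: k y => [|k IH] y.
  by rewrite /= inE => /eqP ->; apply: (ball_step (ball_self 0 x)).
case/ballS_inv => [/IH Hy|[z /IH Hz Hzy]]; first exact: ball_sub Hy.
exact: ball_step Hz Hzy.
Qed.

Lemma ball_fix x i d : ball e i.+1 x = ball e i x -> ball e (i + d) x = ball e i x.
Proof.
move=> Hi; elim: d => [|d IH]; first by rewrite addn0.
by rewrite addnS ballS IH -ballS.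
Qed.

Lemma ball_chain x j : (exists2 i, (i <= j)%N & ball e i.+1 x = ball e i x) \/ (j.+1 <= #|ball e j x|)%N.
Proof.
elim: j => [|j [[i Hi Hf]|IH]].
- by right; rewrite /= cards1.
- by left; exists i => //; apply: leq_trans Hi _.
- have [Heq|Hne] := eqVneq (ball e j.+1 x) (ball e j x); first by left; exists j.
  right; apply: (leq_ltn_trans IH); apply: proper_card; rewrite properEneq eq_sym Hne /=.
  by apply/subsetP => y; apply: ball_sub.
Qed.

Lemma ball_stable k x y : y \in ball e k x -> y \in ball e #|T|.-1 x.
Proof.
have HT : (0 < #|T|)%N by apply/card_gt0P; exists x.
case: (ball_chain x #|T|.-1) => [[i Hi Hf]|Hc] Hy.
  have [Hk|Hk] := leqP k i.
    by apply: (ball_mono Hi); apply: (ball_mono Hk).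
  apply: (ball_mono Hi); rewrite -(ball_fix (k - i) Hf) subnKC //; exact: ltnW.
have : ball e #|T|.-1 x == setT.
  by rewrite eqEcard subsetT cardsT -(prednK HT).
by move/eqP ->; rewrite inE.
Qed.

Lemma dist_some k x y : y \in ball e k x ->
  exists d, [/\ dist e x y = Some d, y \in ball e d x & forall k', y \in ball e k' x -> (d <= k')%N].
Proof.
move=> Hy; have Hs := ball_stable Hy.
have HT : (0 < #|T|)%N by apply/card_gt0P; exists x.
have Hex : [exists k : 'I_#|T|, y \in ball e k x].
  have Hlt : (#|T|.-1 < #|T|)%N by rewrite ltn_predL.
  by apply/existsP; exists (Ordinal Hlt).
rewrite /dist Hex.
set P := fun k => y \in ball e k x.
have Hhas : has P (iota 0 #|T|).
  apply/hasP; exists #|T|.-1 => //; rewrite mem_iota /= add0n; by rewrite prednK.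
have Hlt := Hhas; rewrite has_find size_iota in Hlt.
have Hnth := nth_find 0 Hhas; rewrite nth_iota // add0n in Hnth.
exists (find P (iota 0 #|T|)); split => // k' Hk'.
have [Hk|Hk] := ltnP k' #|T|; last by apply: ltnW; apply: leq_trans Hlt Hk.
rewrite leqNgt; apply/negP => Hlt'.
have := before_find 0 Hlt'; rewrite nth_iota // add0n.
by rewrite /P Hk'.
Qed.

End G.

Lemma ball_hom (T T' : finType) (e : rel T) (e' : rel T') (h : T -> T') :
  (forall a b, e a b -> h a = h b \/ e' (h a) (h b)) ->
  forall k x y, y \in ball e k x -> h y \in ball e' k (h x).
Proof.
move=> Hh; elim=> [|k IH] x y.
  by rewrite /= !inE => /eqP ->.
case/ballS_inv => [/IH Hy|[z /IH Hz /Hh [Heq|Hzy]]]; first exact: ball_sub Hy.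
  by rewrite -Heq; exact: ball_sub Hz.
exact: ball_step Hz Hzy.
Qed.


Local Open Scope ring_scope.

Section Yk.
Variables (n' m : nat) (D : finType) (f : D -> int).
Local Notation n := n'.+1.
Local Notation V := (yk_vtx n m f).
Local Notation E := (@yk_entry n m D f).
Local Notation eqat := (yk_eqat n m).

Lemma eqat_refl j a : eqat j a a.
Proof. by rewrite /yk_eqat; case: ifP. Qed.

Lemma eqat_sym j a b : eqat j a b -> eqat j b a.
Proof. by rewrite /yk_eqat; case: ifP => _ /eqP ->. Qed.

Lemma eqat_trans j a b c : eqat j a b -> eqat j b c -> eqat j a c.
Proof. by rewrite /yk_eqat; case: ifP => _ /eqP -> /eqP ->. Qed.

Lemma eqat_add j a b c d : eqat j a b -> eqat j c d -> eqat j (a + c) (b + d).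
Proof.
rewrite /yk_eqat; case: ifP => _ /eqP Hab /eqP Hcd; apply/eqP; last by rewrite Hab Hcd.
by rewrite -modzDm Hab Hcd modzDm.
Qed.

Lemma eqat_opp j a b : eqat j a b -> eqat j (- a) (- b).
Proof.
rewrite /yk_eqat; case: ifP => _ /eqP Hab; apply/eqP; last by rewrite Hab.
by rewrite -modzNm Hab modzNm.
Qed.

Lemma eqat_sub j a b c d : eqat j a b -> eqat j c d -> eqat j (a - c) (b - d).
Proof. by move=> H1 H2; apply: eqat_add H1 (eqat_opp H2). Qed.

Lemma eqat_eq j a b : a = b -> eqat j a b.
Proof. by move=> ->; apply: eqat_refl. Qed.

Definition Dl (g : nat -> int) (j : nat) : int :=
  (if j is j'.+1 then g j' else 0) - (if (j <= m)%N then g j else 0).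
Arguments Dl : simpl never.
Definition Fl (x y : V) g := forall j : 'I_m.+2, eqat j (E y j) (E x j + Dl g j).
Definition cost (g : nat -> int) := (\sum_(i < m.+1) `|g i|)%N.
Definition mv (i : nat) (s : int) : nat -> int := fun k => if k == i then s else 0.
Definition gadd (g h : nat -> int) := fun k => g k + h k.
Definition gopp (g : nat -> int) := fun k => - g k.

Lemma Dl_add g h j : Dl (gadd g h) j = Dl g j + Dl h j.
Proof. rewrite /Dl /gadd; case: j => [|j] /=; [case: (0 <= m)%N | case: (j.+1 <= m)%N]; lia. Qed.

Lemma Dl_opp g j : Dl (gopp g) j = - Dl g j.
Proof. rewrite /Dl /gopp; case: j => [|j] /=; [case: (0 <= m)%N | case: (j.+1 <= m)%N]; lia. Qed.

Lemma Fl_refl x : Fl x x (fun _ => 0).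
Proof. move=> j; apply: eqat_eq; rewrite /Dl if_same; case: (nat_of_ord j) => [|k] /=; lia. Qed.

Lemma Fl_trans x y z g h : Fl x y g -> Fl y z h -> Fl x z (gadd g h).
Proof.
move=> H1 H2 j; rewrite Dl_add addrA.
exact: (eqat_trans (H2 j) (eqat_add (H1 j) (eqat_refl j (Dl h j)))).
Qed.

Lemma Fl_sym x y g : Fl x y g -> Fl y x (gopp g).
Proof.
move=> H j; rewrite Dl_opp.
have := eqat_add (H j) (eqat_refl j (- Dl g j)); rewrite -addrA subrr addr0.
by move/eqat_sym.
Qed.

Lemma cost_add g h : (cost (gadd g h) <= cost g + cost h)%N.
Proof. rewrite /cost -big_split /=; apply: leq_sum => i _; rewrite /gadd; lia. Qed.

Lemma cost_opp g : cost (gopp g) = cost g.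
Proof. rewrite /cost; apply: eq_bigr => i _; rewrite /gopp; lia. Qed.

Lemma Dl_mv i s j : (i <= m)%N ->
  Dl (mv i s) j = (if j == i.+1 then s else 0) - (if j == i then s else 0).
Proof.
move=> Hi; rewrite /Dl /mv; case: j => [|j]; first by rewrite leq0n.
rewrite eqSS; case: leqP => // H; have -> : (j.+1 == i) = false by apply/eqP; lia.
by [].
Qed.

Lemma FlP x y g : Fl x y g <-> forall j, (j <= m.+1)%N -> eqat j (E y j) (E x j + Dl g j).
Proof.
split=> H j; last by apply: H; rewrite -ltnS; exact: ltn_ord.
move=> Hj; have := H (inord j); by rewrite inordK.
Qed.

Lemma eqat_subr j a b c : eqat j a (b + c) -> eqat j (a - c) b.
Proof. move=> H; have := eqat_add H (eqat_refl j (- c)); by rewrite -addrA subrr addr0. Qed.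

Lemma eqat_addr j a b c : eqat j (a - c) b -> eqat j a (b + c).
Proof. move=> H; have := eqat_add H (eqat_refl j c); by rewrite subrK. Qed.

Lemma eqat_addK j a b c : eqat j a (b - c) -> eqat j (a + c) b.
Proof. move=> H; have := eqat_add H (eqat_refl j c); by rewrite subrK. Qed.

Lemma adj_mv u v : yk_adj u v ->
  exists i : 'I_m.+1, exists2 s : int, (s == 1) || (s == -1) & Fl u v (mv i s).
Proof.
case/andP => _ /existsP [i /andP [/forallP Hj Hc]]; exists i.
have Hi : (i <= m)%N by rewrite -ltnS ltn_ord.
have Hne : forall j : 'I_m.+2, nat_of_ord j != i -> nat_of_ord j != i.+1 ->
    eqat j (E v j) (E u j + Dl (mv i 0) j).
  move=> j H1 H2; rewrite Dl_mv // !if_same subrr addr0; apply: eqat_sym.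
  by have := Hj j; rewrite H1 H2.
case/orP: Hc => /andP [H1 H2]; [exists 1 => //| exists (-1) => //] => j;
  (have [Ei|Ni] := eqVneq (nat_of_ord j) i; [|have [Ei1|Ni1] := eqVneq (nat_of_ord j) i.+1]).
- by rewrite Dl_mv // Ei eqxx (ltn_eqF (ltnSn i)) sub0r; exact: eqat_sym (eqat_subr H1).
- by rewrite Dl_mv // Ei1 eqxx (gtn_eqF (ltnSn i)) subr0; exact: eqat_sym (eqat_addK H2).
- by rewrite Dl_mv // (negbTE Ni) (negbTE Ni1) subrr addr0; apply: eqat_sym; have := Hj j; rewrite Ni Ni1.
- by rewrite Dl_mv // Ei eqxx (ltn_eqF (ltnSn i)) sub0r opprK; exact: eqat_sym (eqat_addK H1).
- by rewrite Dl_mv // Ei1 eqxx (gtn_eqF (ltnSn i)) subr0; exact: eqat_sym (eqat_subr H2).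
- by rewrite Dl_mv // (negbTE Ni) (negbTE Ni1) subrr addr0; apply: eqat_sym; have := Hj j; rewrite Ni Ni1.
Qed.
Lemma mv_adj u v (i : 'I_m.+1) s : u != v -> (s == 1) || (s == -1) -> Fl u v (mv i s) -> yk_adj u v.
Proof.
move=> Hne Hs /FlP H; have Hi : (i <= m)%N by rewrite -ltnS ltn_ord.
have Hi1 : (i.+1 <= m.+1)%N by [].
have Hi0 : (i <= m.+1)%N by apply: leqW.
rewrite /yk_adj Hne /=; apply/existsP; exists i; apply/andP; split.
  apply/forallP => j; apply/implyP => /andP [N1 N2].
  have := H j; rewrite -ltnS ltn_ord => /(_ isT).
  by rewrite Dl_mv // (negbTE N1) (negbTE N2) subrr addr0 => /eqat_sym.
have := H i Hi0; have := H i.+1 Hi1; rewrite !Dl_mv // !eqxx (ltn_eqF (ltnSn i)) (gtn_eqF (ltnSn i)).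
case/orP: Hs => /eqP -> A B; apply/orP; [left|right]; apply/andP; split.
- by rewrite sub0r in B; apply: eqat_addr; apply: eqat_sym.
- by rewrite subr0 in A; apply: eqat_sym; apply: eqat_subr.
- by rewrite sub0r opprK in B; apply: eqat_sym; apply: eqat_subr.
- by rewrite subr0 in A; apply: eqat_addr; apply: eqat_sym.
Qed.

Lemma cost_mv (i : 'I_m.+1) s : (s == 1) || (s == -1) -> cost (mv i s) = 1%N.
Proof.
move=> Hs; rewrite /cost (bigD1 i) //= big1 ?addn0.
  by rewrite /mv eqxx; case/orP: Hs => /eqP ->.
by move=> j Hj; rewrite /mv ifN_eq.
Qed.
Lemma Fl_ball k x y : y \in ball (@yk_adj n m D f) k x -> exists g, Fl x y g /\ (cost g <= k)%N.
Proof.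
elim: k y => [|k IH] y.
  rewrite /= inE => /eqP ->; exists (fun _ => 0); split; first exact: Fl_refl.
  by rewrite /cost big1.
case/ballS_inv => [/IH [g [Hg Hc]]|[z /IH [g [Hg Hc]] /adj_mv [i [s Hs Hm]]]].
  by exists g; split => //; apply: leqW.
exists (gadd g (mv i s)); split; first exact: Fl_trans Hg Hm.
apply: leq_trans (cost_add _ _) _; by rewrite cost_mv // addn1.
Qed.

Definition Er (w : 'I_n * m.-tuple D * 'I_n) (j : nat) : int :=
  if j == 0%N then (nat_of_ord w.1.1)%:Z
  else if j == m.+1 then (nat_of_ord w.2)%:Z
  else nth 0 (map f w.1.2) j.-1.

Lemma EEr x j : E x j = Er (val x) j.
Proof. by []. Qed.

Lemma sum_split (F : nat -> int) :
  \sum_(j < m.+2) F j = F 0%N + \sum_(i < m) F i.+1 + F m.+1.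
Proof. rewrite big_ord_recl big_ord_recr /= addrA; reflexivity. Qed.

Lemma cond_iff w : yk_cond f w = (n %| \sum_(j < m.+2) Er w j)%Z.
Proof.
rewrite /yk_cond sum_split.
have -> : \sum_(d <- w.1.2) f d = \sum_(i < m) Er w i.+1.
  rewrite -(big_map f xpredT id) (big_nth 0) size_map size_tuple big_mkord.
  by apply: eq_bigr => i _; rewrite /Er /= eqSS (ltn_eqF (ltn_ord i)).
have -> : Er w 0 = (nat_of_ord w.1.1)%:Z by [].
have -> : Er w m.+1 = (nat_of_ord w.2)%:Z by rewrite /Er eqxx.
by rewrite mod0z; apply/idP/idP => [/eqP/dvdz_mod0P //|/dvdz_mod0P ->].
Qed.

Lemma cond_sum (x : V) : (n %| \sum_(j < m.+2) E x j)%Z.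
Proof. by rewrite -cond_iff; case: x. Qed.

Lemma ext (finj : injective f) (x y : V) :
  (forall j, (j <= m.+1)%N -> eqat j (E x j) (E y j)) -> x = y.
Proof.
case: x => [[[a t] b] Hx]; case: y => [[[a' t'] b'] Hy] H; apply: val_inj => /=.
have H0 := H 0%N isT; have Hm := H m.+1 (leqnn _).
rewrite /yk_eqat /yk_entry /= in H0; rewrite /yk_eqat /yk_entry !eqxx orbT /= in Hm.
have ha : a = a'.
  apply: val_inj; move: H0; rewrite !modz_small; first by move/eqP => [].
  - by rewrite lez_nat /= ltz_nat ltn_ord.
  - by rewrite lez_nat /= ltz_nat ltn_ord.
have hb : b = b'.
  apply: val_inj; move: Hm; rewrite !modz_small; first by move/eqP => [].
  - by rewrite lez_nat /= ltz_nat ltn_ord.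
  - by rewrite lez_nat /= ltz_nat ltn_ord.
have ht : t = t'.
  apply: val_inj; apply: (inj_map finj); apply: (@eq_from_nth _ 0).
    by rewrite !size_map !size_tuple.
  move=> i; rewrite size_map size_tuple => Hi.
  have := H i.+1 (ltnW Hi); rewrite /yk_eqat /yk_entry /= eqSS (ltn_eqF Hi) /=.
  by move/eqP.
by rewrite ha hb ht.
Qed.

Section Mk.
Variables (dec : int -> D) (ok : pred int) (decK : forall a, ok a -> f (dec a) = a).

Lemma zI_proof (a : int) : (`|(a %% n%:Z)%Z|%N < n)%N.
Proof. lia. Qed.
Definition zI (a : int) : 'I_n := Ordinal (zI_proof a).

Definition mkt (e : nat -> int) : 'I_n * m.-tuple D * 'I_n :=
  (zI (e 0%N), @Tuple m D (mkseq (fun i => dec (e i.+1)) m) (introT eqP (size_mkseq _ _)), zI (e m.+1)).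

Lemma mkt_E e j : (j <= m.+1)%N -> (forall j, (0 < j <= m)%N -> ok (e j)) ->
  eqat j (Er (mkt e) j) (e j).
Proof.
move=> Hj Hok; rewrite /Er /yk_eqat.
case: (eqVneq j 0%N) => [->|H0] /=.
  apply/eqP; have -> : (`|(e 0%N %% n%:Z)%Z|%N)%:Z = (e 0%N %% n%:Z)%Z by lia.
  by rewrite modz_mod.
case: (eqVneq j m.+1) => [->|Hm] /=.
  apply/eqP; have -> : (`|(e m.+1 %% n%:Z)%Z|%N)%:Z = (e m.+1 %% n%:Z)%Z by lia.
  by rewrite modz_mod.
have Hj' : (j.-1 < m)%N by lia.
rewrite (nth_map (dec 0)) ?size_mkseq // nth_mkseq // prednK ?lt0n // decK //.
by apply: Hok; lia.
Qed.

Lemma mkt_cond (e : nat -> int) : (n %| \sum_(j < m.+2) e j)%Z -> (forall j, (0 < j <= m)%N -> ok (e j)) ->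
  yk_cond f (mkt e).
Proof.
move=> Hs Hok; rewrite cond_iff; move: Hs; rewrite !sum_split.
have -> : \sum_(i < m) Er (mkt e) i.+1 = \sum_(i < m) e i.+1.
  apply: eq_bigr => i _; have := mkt_E (e := e) (j := i.+1) (ltnW (ltn_ord i)) Hok.
  by rewrite /yk_eqat /= eqSS (ltn_eqF (ltn_ord i)) => /eqP.
have -> : Er (mkt e) 0 = (e 0%N %% n%:Z)%Z by rewrite /Er /=; lia.
have -> : Er (mkt e) m.+1 = (e m.+1 %% n%:Z)%Z by rewrite /Er /= eqxx; lia.
set S := \sum_(i < m) e i.+1.
rewrite {1}(divz_eq (e 0%N) n) {1}(divz_eq (e m.+1) n) => H.
have -> : (e 0%N %% n%:Z)%Z + S + (e m.+1 %% n%:Z)%Z =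
  ((e 0%N %/ n%:Z)%Z * n%:Z + (e 0%N %% n%:Z)%Z + S + ((e m.+1 %/ n%:Z)%Z * n%:Z + (e m.+1 %% n%:Z)%Z))
  - ((e 0%N %/ n%:Z)%Z + (e m.+1 %/ n%:Z)%Z) * n%:Z by ring.
by rewrite rpredB // dvdz_mull.
Qed.

End Mk.
Definition mk (dec : int -> D) (ok : pred int) (decK : forall a, ok a -> f (dec a) = a)
  (e : nat -> int) (H1 : (n %| \sum_(j < m.+2) e j)%Z)
  (H2 : forall j, (0 < j <= m)%N -> ok (e j)) : V :=
  exist _ (mkt dec e) (mkt_cond decK H1 H2).

Lemma mk_E dec ok decK e H1 H2 j : (j <= m.+1)%N -> eqat j (E (@mk dec ok decK e H1 H2) j) (e j).
Proof. move=> Hj; exact: (mkt_E decK Hj H2). Qed.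

Lemma Fl_exists x y : exists g, Fl x y g.
Proof.
exists (fun i => \sum_(j < i.+1) (E x j - E y j)); apply/FlP => j Hj.
case: (eqVneq j 0%N) => [->|H0].
  by apply: eqat_eq; rewrite /Dl leq0n big_ord1 /=; ring.
case: (eqVneq j m.+1) => [->|Hm].
  rewrite /Dl ltnn /yk_eqat eqxx orbT subr0 eqz_mod_dvd.
  have := rpredB (cond_sum x) (cond_sum y).
  rewrite -sumrB big_ord_recr /=.
  have -> : E y m.+1 - (E x m.+1 + \sum_(j < m.+1) (E x j - E y j)) =
    - (\sum_(i < m.+1) (E x i - E y i) + (E x m.+1 - E y m.+1)) by ring.
  by rewrite rpredN.
apply: eqat_eq; case: j Hj H0 Hm => [|j] // Hj _ Hm.
rewrite /Dl; have -> : (j.+1 <= m)%N by lia.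
rewrite (big_ord_recr j.+1) /=; ring.
Qed.
Lemma tele (g : nat -> int) k : \sum_(i < k) (g i - g i.+1) = g 0%N - g k.
Proof. elim: k => [|k IH]; first by rewrite big_ord0 subrr. rewrite big_ord_recr /= IH; ring. Qed.

Lemma sum_Dl g : \sum_(j < m.+2) Dl g j = 0.
Proof.
rewrite sum_split.
have -> : \sum_(i < m) Dl g i.+1 = \sum_(i < m) (g i - g i.+1).
  by apply: eq_bigr => i _; rewrite /Dl ltn_ord.
by rewrite tele /Dl leq0n ltnn; ring.
Qed.

Lemma cost0 g : cost g = 0%N -> forall k, (k <= m)%N -> g k = 0.
Proof.
move=> /eqP; rewrite /cost sum_nat_eq0 => /forallP H k Hk.
by have := H (Ordinal (Hk : (k < m.+1)%N)); rewrite /= absz_eq0 => /eqP.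
Qed.

Lemma Fl_cost0 (finj : injective f) x y g : cost g = 0%N -> Fl x y g -> x = y.
Proof.
move=> Hc /FlP H; apply: ext => // j Hj; apply: eqat_sym.
have := H j Hj; suff -> : Dl g j = 0 by rewrite addr0.
rewrite /Dl; case: j Hj => [|j] Hj; first by rewrite cost0 // subrr.
rewrite cost0 //; case: ifP => // Hjm; rewrite cost0 //.
Qed.

Lemma cost_dec (g : nat -> int) (i : 'I_m.+1) s : (s == 1) || (s == -1) -> 0 < s * g i ->
  (cost (gadd (gopp (mv i s)) g) < cost g)%N.
Proof.
move=> Hs Hp; rewrite /cost (bigD1 i) //= [X in (_ < X)%N](bigD1 i) //=.
have -> : \sum_(j < m.+1 | j != i) `|gadd (gopp (mv i s)) g j|%N = \sum_(j < m.+1 | j != i) `|g j|%N.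
  by apply: eq_bigr => j Hj; rewrite /gadd /gopp /mv ifN_eq // oppr0 add0r.
rewrite ltn_add2r /gadd /gopp /mv eqxx.
by case/orP: Hs Hp => /eqP ->; lia.
Qed.

End Yk.
Lemma good_pos (m : nat) (a b g : nat -> int) :
  (forall j, (0 < j <= m)%N -> [/\ 0 <= a j <= 1, 0 <= b j <= 1 & b j = a j + g j.-1 - g j]) ->
  forall i, (i <= m)%N -> 0 < g i ->
  exists i, [/\ (i <= m)%N, 0 < g i, (i == 0%N) || (a i == 1) & (i == m) || (a i.+1 == 0)].
Proof.
move=> H.
have down : forall i, (i <= m)%N -> 0 < g i -> (i == m) || (a i.+1 == 0) ->
    exists i, [/\ (i <= m)%N, 0 < g i, (i == 0%N) || (a i == 1) & (i == m) || (a i.+1 == 0)].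
  elim=> [|i IH] Hi Hg Hr; first by exists 0%N; split.
  case: (eqVneq (a i.+1) 1) => Ha; first by exists i.+1; rewrite Ha orbT.
  have [Ha' Hb' He] : [/\ 0 <= a i.+1 <= 1, 0 <= b i.+1 <= 1 & b i.+1 = a i.+1 + g i - g i.+1].
    by apply: H; lia.
  apply: IH; [lia | lia |].
  apply/orP; right; apply/eqP; move: Ha; lia.
have up : forall k i, (m - i)%N = k -> (i <= m)%N -> 0 < g i ->
    exists i, [/\ (i <= m)%N, 0 < g i & (i == m) || (a i.+1 == 0)].
  elim=> [|k IH] i Hk Hi Hg.
    by exists i; split => //; apply/orP; left; apply/eqP; lia.
  case: (ltrP 0 (g i.+1)) => Hg1.
    by apply: (IH i.+1) => //; lia.
  have [Ha' Hb' He] : [/\ 0 <= a i.+1 <= 1, 0 <= b i.+1 <= 1 & b i.+1 = a i.+1 + g i - g i.+1].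
    by apply: H; lia.
  exists i; split => //; apply/orP; right; apply/eqP; lia.
move=> i Hi Hg; have [i' [Hi' Hg' Hr]] := up _ i erefl Hi Hg.
exact: down Hi' Hg' Hr.
Qed.

Lemma good_neg (m : nat) (a b g : nat -> int) :
  (forall j, (0 < j <= m)%N -> [/\ 0 <= a j <= 1, 0 <= b j <= 1 & b j = a j + g j.-1 - g j]) ->
  forall i, (i <= m)%N -> g i < 0 ->
  exists i, [/\ (i <= m)%N, g i < 0, (i == 0%N) || (a i == 0) & (i == m) || (a i.+1 == 1)].
Proof.
move=> H.
have down : forall i, (i <= m)%N -> g i < 0 ->
    exists i, [/\ (i <= m)%N, g i < 0 & (i == 0%N) || (a i == 0)].
  elim=> [|i IH] Hi Hg; first by exists 0%N; split.
  case: (ltrP (g i) 0) => Hg1; first by apply: IH => //; lia.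
  have [Ha' Hb' He] : [/\ 0 <= a i.+1 <= 1, 0 <= b i.+1 <= 1 & b i.+1 = a i.+1 + g i - g i.+1].
    by apply: H; lia.
  exists i.+1; split => //; apply/orP; right; apply/eqP; lia.
have up : forall k i, (m - i)%N = k -> (i <= m)%N -> g i < 0 -> (i == 0%N) || (a i == 0) ->
    exists i, [/\ (i <= m)%N, g i < 0, (i == 0%N) || (a i == 0) & (i == m) || (a i.+1 == 1)].
  elim=> [|k IH] i Hk Hi Hg Hl.
    by exists i; split => //; apply/orP; left; apply/eqP; lia.
  case: (eqVneq (a i.+1) 1) => Ha; first by exists i; rewrite Ha orbT.
  have [Ha' Hb' He] : [/\ 0 <= a i.+1 <= 1, 0 <= b i.+1 <= 1 & b i.+1 = a i.+1 + g i - g i.+1].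
    by apply: H; lia.
  apply: (IH i.+1); [lia | lia | move: Ha; lia |].
  apply/orP; right; apply/eqP; move: Ha; lia.
move=> i Hi Hg; have [i' [Hi' Hg' Hl]] := down i Hi Hg.
exact: up _ i' erefl Hi' Hg' Hl.
Qed.

Section Main.
Variables (n' m : nat).
Local Notation n := n'.+1.
Local Notation Yv := (yk_vtx n m yoke_val).
Local Notation Zv := (yk_vtx n m dyoke_val).
Local Notation EY := (@yk_entry n m _ yoke_val).
Local Notation EZ := (@yk_entry n m _ dyoke_val).
Local Notation eqat := (yk_eqat n m).

Lemma Y01 (u : Yv) j : (0 < j <= m)%N -> 0 <= EY u j <= 1.
Proof.
move=> Hj; rewrite /yk_entry.
have -> : (j == 0%N) = false by apply/eqP; lia.
have -> : (j == m.+1) = false by apply/eqP; lia.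
rewrite (nth_map false) ?size_tuple; last by lia.
by case: nth.
Qed.

Lemma Z01 (u : Zv) j : (0 < j <= m)%N -> -1 <= EZ u j <= 1.
Proof.
move=> Hj; rewrite /yk_entry.
have -> : (j == 0%N) = false by apply/eqP; lia.
have -> : (j == m.+1) = false by apply/eqP; lia.
rewrite (nth_map ord0) ?size_tuple; last by lia.
rewrite /dyoke_val; case: (nth _ _ _) => k Hk /=; lia.
Qed.

Definition decY (a : int) : bool := a == 1.
Definition okY (a : int) : bool := 0 <= a <= 1.
Lemma decYK a : okY a -> yoke_val (decY a) = a.
Proof. rewrite /okY /decY /yoke_val; case: eqP => [->|]; lia. Qed.

Definition decZ (a : int) : 'I_3 := inord (absz (a + 1)).
Definition okZ (a : int) : bool := -1 <= a <= 1.
Lemma decZK a : okZ a -> dyoke_val (decZ a) = a.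
Proof. rewrite /okZ /decZ /dyoke_val => H; rewrite inordK; lia. Qed.

Lemma yoke_inj : injective yoke_val.
Proof. by case=> [] []. Qed.
Lemma dyoke_inj : injective dyoke_val.
Proof. move=> a b; rewrite /dyoke_val => H; apply: ord_inj; lia. Qed.

Lemma Yint (u v : Yv) g : Fl u v g -> forall j, (0 < j <= m)%N ->
  [/\ 0 <= EY u j <= 1, 0 <= EY v j <= 1 & EY v j = EY u j + g j.-1 - g j].
Proof.
move=> /FlP H j Hj; split; [exact: Y01 | exact: Y01 |].
have := H j (leqW (proj2 (andP Hj))); rewrite /yk_eqat.
have -> : (j == 0%N) = false by apply/eqP; lia.
have -> : (j == m.+1) = false by apply/eqP; lia.
rewrite /= /Dl; case: j Hj => [//|j] /andP [_ Hj] /=; rewrite Hj => /eqP ->; ring.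
Qed.

Lemma good_move (u v : Yv) g (i0 : nat) : Fl u v g -> (i0 <= m)%N -> g i0 != 0 ->
  exists (i : 'I_m.+1) s, [/\ (s == 1) || (s == -1), 0 < s * g i &
     forall j, (0 < j <= m)%N -> okY (EY u j + Dl m (mv i s) j)].
Proof.
move=> Hf Hi0 Hg0; have Hab := Yint Hf.
case: (ltrP 0 (g i0)) => Hg.
  have [i [Hi Hgi Hl Hr]] := good_pos Hab Hi0 Hg.
  exists (Ordinal (Hi : (i < m.+1)%N)), 1; split => //=; first by rewrite mul1r.
  move=> j Hj; rewrite Dl_mv // /okY; have := Y01 u Hj.
  case: (eqVneq j i.+1) => [Ej|Nj]; case: (eqVneq j i) => [Ei|Ni].
  - lia.
  - have Him : (i == m) = false by apply/eqP; lia.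
    move: Hr; rewrite Him /= => /eqP Ha; rewrite Ej Ha; lia.
  - have Hiz : (i == 0%N) = false by apply/eqP; lia.
    move: Hl; rewrite Hiz /= => /eqP Ha; rewrite Ei Ha; lia.
  - by rewrite subrr addr0.
have Hg' : g i0 < 0 by move: Hg0 Hg; lia.
have [i [Hi Hgi Hl Hr]] := good_neg Hab Hi0 Hg'.
exists (Ordinal (Hi : (i < m.+1)%N)), (-1); split => //=; first by rewrite mulN1r oppr_gt0.
move=> j Hj; rewrite Dl_mv // /okY; have := Y01 u Hj.
case: (eqVneq j i.+1) => [Ej|Nj]; case: (eqVneq j i) => [Ei|Ni].
- lia.
- have Him : (i == m) = false by apply/eqP; lia.
  move: Hr; rewrite Him /= => /eqP Ha; rewrite Ej Ha; lia.
- have Hiz : (i == 0%N) = false by apply/eqP; lia.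
  move: Hl; rewrite Hiz /= => /eqP Ha; rewrite Ei Ha; lia.
- by rewrite subrr addr0.
Qed.


Lemma M (v : Yv) : forall c (u : Yv) g, (cost m g <= c)%N -> Fl u v g ->
  v \in ball (@Yoke_adj n m) (cost m g) u.
Proof.
elim=> [|c IH] u g Hc Hf.
  have H0 : cost m g = 0%N by lia.
  by rewrite H0 (Fl_cost0 yoke_inj H0 Hf); apply: ball_self.
case: (posnP (cost m g)) => [H0|Hpos].
  by rewrite H0 (Fl_cost0 yoke_inj H0 Hf); apply: ball_self.
have [i0 Hi0] : exists i0 : 'I_m.+1, g i0 != 0.
  move: Hpos; rewrite lt0n /cost sum_nat_eq0 negb_forall => /existsP [i Hi].
  by exists i; move: Hi; rewrite absz_eq0.
have [i [s [Hs Hp Hok]]] := good_move Hf (ltn_ord i0 : (i0 <= m)%N) Hi0.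
pose e := fun j => EY u j + Dl m (mv i s) j.
have H1 : (n %| \sum_(j < m.+2) e j)%Z.
  by rewrite /e big_split /= sum_Dl addr0 cond_sum.
pose u' := @mk n' m _ yoke_val decY okY decYK e H1 Hok.
have Hu : Fl u u' (mv i s).
  by apply/FlP => j Hj; apply: mk_E.
have Hf' := Fl_trans (Fl_sym Hu) Hf.
have Hlt := cost_dec Hs Hp.
have IH' := IH u' _ (leq_trans (ltnSn _) (leq_trans Hlt Hc) : (_ <= c)%N) Hf'.
case: (eqVneq u u') => [Heq|Hne].
  by rewrite Heq; apply: ball_mono IH'; apply: ltnW.
apply: (ball_mono (k := (cost m (gadd (gopp (mv i s)) g)).+1)) => //.
exact: ball_pre (mv_adj Hne Hs Hu) IH'.
Qed.

Lemma Yconn (u v : Yv) : exists k, v \in ball (@Yoke_adj n m) k u.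
Proof. have [g Hg] := Fl_exists u v; exists (cost m g); exact: M (leqnn _) Hg. Qed.

Section Phi.
Variable u : Yv.

Lemma phi_H1 (p : Yv) : (n %| \sum_(j < m.+2) (EY p j - EY u j))%Z.
Proof. by rewrite sumrB rpredB // cond_sum. Qed.

Lemma phi_H2 (p : Yv) j : (0 < j <= m)%N -> okZ (EY p j - EY u j).
Proof. move=> Hj; have := Y01 p Hj; have := Y01 u Hj; rewrite /okZ; lia. Qed.

Definition phi (p : Yv) : Zv :=
  @mk n' m _ dyoke_val decZ okZ decZK (fun j => EY p j - EY u j) (phi_H1 p) (@phi_H2 p).

Lemma phi_E p j : (j <= m.+1)%N -> eqat j (EZ (phi p) j) (EY p j - EY u j).
Proof. move=> Hj; exact: mk_E. Qed.

Lemma phi_hom p q : Yoke_adj p q -> phi p = phi q \/ dYoke_adj (phi p) (phi q).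
Proof.
case/adj_mv => i [s Hs /FlP Hf].
have Hz : Fl (phi p) (phi q) (mv i s).
  apply/FlP => j Hj; apply: (eqat_trans (phi_E q Hj)).
  have := eqat_add (Hf j Hj) (@eqat_refl n' m j (- EY u j)).
  have -> : EY p j + Dl m (mv i s) j - EY u j = (EY p j - EY u j) + Dl m (mv i s) j by ring.
  move/eqat_trans; apply; apply: eqat_add (eqat_sym (phi_E p Hj)) (@eqat_refl n' m _ _).
case: (eqVneq (phi p) (phi q)) => [->|Hne]; first by left.
by right; apply: mv_adj Hne Hs Hz.
Qed.

Variable z : Zv.
Hypothesis Hz : forall j : 'I_m.+2, EZ z j = 0.

Lemma Hz' j : (j <= m.+1)%N -> EZ z j = 0.
Proof. move=> Hj; have := Hz (inord j); by rewrite inordK. Qed.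

Lemma phi_u : phi u = z.
Proof.
apply: (ext dyoke_inj) => j Hj; rewrite Hz' //.
by have := phi_E u Hj; rewrite subrr.
Qed.

Lemma Fl_transfer v g : Fl z (phi v) g -> Fl u v g.
Proof.
move/FlP => H; apply/FlP => j Hj.
have := eqat_trans (eqat_sym (phi_E v Hj)) (H j Hj); rewrite Hz' // add0r.
move/eqat_addr; by rewrite addrC.
Qed.

End Phi.

Lemma realize (w : Zv) : exists u v : Yv, phi u v = w.
Proof.
pose c := fun j => if EZ w j == -1 then 1 else 0 : int.
pose eu := fun j : nat => if j == 0%N then 0 else if j == m.+1 then - \sum_(i < m) c i.+1 else c j.
have Hsu : \sum_(j < m.+2) eu j = 0.
  rewrite sum_split.
  have -> : \sum_(i < m) eu i.+1 = \sum_(i < m) c i.+1.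
    by apply: eq_bigr => i _; rewrite /eu /= eqSS (ltn_eqF (ltn_ord i)).
  rewrite /eu /= eqxx; ring.
have H1u : (n %| \sum_(j < m.+2) eu j)%Z by rewrite Hsu dvdz0.
have H2u : forall j, (0 < j <= m)%N -> okY (eu j).
  move=> j Hj; rewrite /eu /okY.
  have -> : (j == 0%N) = false by apply/eqP; lia.
  have -> : (j == m.+1) = false by apply/eqP; lia.
  by rewrite /c; case: ifP.
pose ev := fun j => eu j + EZ w j.
have H1v : (n %| \sum_(j < m.+2) ev j)%Z by rewrite /ev big_split /= Hsu add0r cond_sum.
have H2v : forall j, (0 < j <= m)%N -> okY (ev j).
  move=> j Hj; rewrite /ev /eu /okY.
  have -> : (j == 0%N) = false by apply/eqP; lia.
  have -> : (j == m.+1) = false by apply/eqP; lia.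
  have := Z01 w Hj; rewrite /c; case: eqP; lia.
pose u := @mk n' m _ yoke_val decY okY decYK eu H1u H2u.
pose v := @mk n' m _ yoke_val decY okY decYK ev H1v H2v.
exists u, v; apply: (ext dyoke_inj) => j Hj.
apply: (eqat_trans (phi_E u v Hj)).
apply: (eqat_trans (eqat_sub (mk_E decYK H1v H2v Hj) (mk_E decYK H1u H2u Hj))).
by apply: eqat_eq; rewrite /ev; ring.
Qed.

End Main.

Local Close Scope ring_scope.
Unset Implicit Arguments.

Theorem theorem5p22 (n m : nat) : (0 < n)%N ->
  forall z : dYoke_vtx n m, (forall j : 'I_m.+2, yk_entry z j = 0%R) ->
  diam (@Yoke_adj n m) = ecc (@dYoke_adj n m) z.
Proof.
case: n => [//|n'] _ z Hz.
have dY : forall u v : Yoke_vtx n'.+1 m, exists d,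
    [/\ dist (@Yoke_adj n'.+1 m) u v = Some d, v \in ball (@Yoke_adj n'.+1 m) d u &
        forall k, v \in ball (@Yoke_adj n'.+1 m) k u -> (d <= k)%N].
  by move=> u v; have [k Hk] := Yconn u v; exact: dist_some Hk.
have hom : forall (u v : Yoke_vtx n'.+1 m) k, v \in ball (@Yoke_adj n'.+1 m) k u ->
    phi u v \in ball (@dYoke_adj n'.+1 m) k z.
  move=> u v k Hk; have := ball_hom (@phi_hom n' m u) Hk.
  by rewrite (@phi_u n' m u z Hz).
have dZ : forall w : dYoke_vtx n'.+1 m, exists d,
    [/\ dist (@dYoke_adj n'.+1 m) z w = Some d, w \in ball (@dYoke_adj n'.+1 m) d z &
        forall k, w \in ball (@dYoke_adj n'.+1 m) k z -> (d <= k)%N].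
  move=> w; have [u [v Hw]] := realize w; have [k Hk] := Yconn u v.
  have := hom u v k Hk; rewrite Hw => H; exact: dist_some H.
rewrite /diam /ecc.
have -> : [forall x, forall y, dist (@Yoke_adj n'.+1 m) x y != None].
  apply/forallP => x; apply/forallP => y; by have [d [-> _ _]] := dY x y.
have -> : [forall y, dist (@dYoke_adj n'.+1 m) z y != None].
  apply/forallP => y; by have [d [-> _ _]] := dZ y.
congr Some; apply/eqP; rewrite eqn_leq; apply/andP; split.
  apply/bigmax_leqP => u _; apply/bigmax_leqP => v _.
  have [d1 [E1 B1 M1]] := dY u v; have [d2 [E2 B2 M2]] := dZ (phi u v).
  rewrite E1 /=; apply: (leq_trans _ (leq_bigmax (phi u v))); rewrite E2 /=.
  have [g [Hg Hc]] := Fl_ball B2.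
  have Hf := @Fl_transfer n' m u z Hz v g Hg.
  have := M (leqnn _) Hf; move/M1 => H; exact: leq_trans H Hc.
apply/bigmax_leqP => w _; have [u [v Hw]] := realize w.
have [d1 [E1 B1 M1]] := dY u v; have [d2 [E2 B2 M2]] := dZ w.
rewrite E2 /=; apply: (leq_trans _ (leq_bigmax u)); apply: (leq_trans _ (leq_bigmax v)).
rewrite E1 /=; apply: M2; rewrite -Hw; exact: hom B1.
Qed.
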